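(* Let $w:\{0,1\}^L\to\mathbb{R}_{\ge 0}$ be a generic fitness landscape inducing the standard staircase triangulation. (i) If the zero-string $0\cdots0$ is a local fitness minimum (all its Hamming neighbours have higher fitness), then it is the global minimum and every edge of the fitness graph is directed toward the endpoint with more $1$'s. (ii) If at most one of the $L$ Hamming neighbours of the zero-string has lower fitness than the zero-string, then the landscape has exactly one peak, and this peak is at Hamming distance at most $1$ from the one-string $1\cdots1$.
   Context: Genotypes are elements of $\{0,1\}^L$, identified with vertices of $[0,1]^L$. The triangulation induced by $w$ is the regular subdivision of $[0,1]^L$ obtained by projecting the upper faces of $\mathrm{conv}\{(g,w_g)\}\subset\mathbb{R}^{L+1}$; $w$ is generic if all $w_g$ are distinct and this subdivision is a triangulation. The fitness graph directs each cube edge toward the genotype of higher fitness; a peak is a genotype all of whose Hamming neighbours have strictly lower fitness. The standard staircase triangulation consists of the $L!$ simplices formed by the genotypes along a walk from $0\cdots0$ to $1\cdots1$ in which each step changes one $0$ into a $1$. *)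

(* Defs.v *)
From mathcomp Require Import all_boot all_order all_algebra all_fingroup.
From mathcomp Require Import reals.
Set Implicit Arguments. Unset Strict Implicit. Unset Printing Implicit Defensive.
Import Order.TTheory GRing.Theory Num.Theory.
Local Open Scope ring_scope.

Definition genotype (L : nat) := {ffun 'I_L -> bool}.

Definition coord {R : realType} {L : nat} (g : genotype L) (i : 'I_L) : R :=
  (g i : nat)%:R.

Definition aff {R : realType} {L : nat} (c : R) (a : 'I_L -> R) (g : genotype L) : R :=
  c + \sum_(i < L) a i * coord g i.

(* A maximal cell of the regular subdivision of [0,1]^L induced by w via the
   UPPER faces of conv{(g, w_g)}: its vertex set F is the set of genotypes whose
   lifts lie on a non-vertical supporting hyperplane (graph of an affine function
   h with h = w on F and h > w off F), and F is full-dimensional (affinely spans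
   R^L: the only affine function vanishing on F is the zero function). *)
Definition upper_cell {R : realType} {L : nat} (w : genotype L -> R)
    (F : {set genotype L}) : Prop :=
  (exists (c : R) (a : 'I_L -> R),
      (forall g, g \in F -> aff c a g = w g) /\
      (forall g, g \notin F -> w g < aff c a g)) /\
  (forall (c : R) (a : 'I_L -> R),
      (forall g, g \in F -> aff c a g = 0) -> c = 0 /\ forall i, a i = 0).

(* The k-th vertex of the staircase walk given by the permutation s:
   the coordinates s 0, ..., s (k-1) are set to 1. *)
Definition stair_vertex {L : nat} (s : {perm 'I_L}) (k : nat) : genotype L :=
  [ffun i => (s^-1)%g i < k]%N.

Definition stair_simplex {L : nat} (s : {perm 'I_L}) : {set genotype L} :=
  [set stair_vertex s (val k) | k : 'I_L.+1].

Definition is_stair_simplex {L : nat} (F : {set genotype L}) : Prop :=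
  exists s : {perm 'I_L}, F = stair_simplex s.

Definition induces_staircase {R : realType} {L : nat} (w : genotype L -> R) : Prop :=
  forall F : {set genotype L}, upper_cell w F <-> is_stair_simplex F.

(* generic: distinct values (the triangulation part is given by induces_staircase) *)
Definition distinct_values {R : realType} {L : nat} (w : genotype L -> R) : Prop :=
  injective w.

Definition hamming {L : nat} (g h : genotype L) : nat := #|[set i | g i != h i]|.
Definition neighbours {L : nat} (g h : genotype L) : bool := hamming g h == 1%N.
Definition num_ones {L : nat} (g : genotype L) : nat := #|[set i | g i]|.

Definition zero_string (L : nat) : genotype L := [ffun => false].
Definition one_string (L : nat) : genotype L := [ffun => true].

Definition is_peak {R : realType} {L : nat} (w : genotype L -> R) (g : genotype L) : Prop :=
  forall h, neighbours g h -> w h < w g.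

(* Main.v *)
Require Import Defs.
From mathcomp Require Import all_boot all_order all_algebra all_fingroup.
From mathcomp Require Import reals zify lra.
Import Order.TTheory GRing.Theory Num.Theory.
Set Implicit Arguments. Unset Strict Implicit.

Definition setb {L : nat} (g : genotype L) (i : 'I_L) : genotype L :=
  [ffun x => (x == i) || g x].

Lemma setbC L (g : genotype L) i j : setb (setb g i) j = setb (setb g j) i.
Proof. by apply/ffunP=> x; rewrite !ffunE orbCA. Qed.

Lemma geno_ind L (Q : genotype L -> Prop) :
  Q (zero_string L) -> (forall (g : genotype L) j, g j = false -> Q g -> Q (setb g j)) ->
  forall g, Q g.
Proof.
move=> H0 HS g; move: (ubnP (num_ones g)) => [n]; elim: n g => // n IH g Hn.
case: (pickP (fun x => g x)) => [j gj | none]; last first.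
  have -> : g = zero_string L by apply/ffunP=> x; rewrite ffunE none.
  exact: H0.
pose g' : genotype L := [ffun x => (x != j) && g x].
have -> : g = setb g' j.
  apply/ffunP=> x; rewrite !ffunE; case: eqP => [->|] //=.
apply: HS; first by rewrite ffunE eqxx.
apply: IH.
have : num_ones g' < num_ones g.
  apply: proper_card; apply/properP; split.
    by apply/subsetP=> x; rewrite !inE ffunE => /andP[].
  by exists j; rewrite !inE ?ffunE ?eqxx.
move=> h; apply: leq_trans h _; by [].
Qed.

Lemma neighb_setb L (g : genotype L) i : g i = false -> neighbours g (setb g i).
Proof.
move=> gi; rewrite /neighbours /hamming.
have -> : [set x | g x != setb g i x] = [set i].
  apply/setP=> x; rewrite !inE ffunE; case: (eqVneq x i) => [->|nx] /=; by rewrite ?gi ?eqxx.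
by rewrite cards1.
Qed.

Lemma neighbP L (g h : genotype L) : neighbours g h ->
  exists i, (g i = false /\ h = setb g i) \/ (h i = false /\ g = setb h i).
Proof.
rewrite /neighbours /hamming => /cards1P [i Hi].
have Hd x : (g x != h x) = (x == i) by rewrite -in_set1 -Hi inE.
exists i; case gi: (g i).
- right; have hi : h i = false.
    by move: (Hd i); rewrite eqxx gi; case: (h i).
  split=> //; apply/ffunP=> x; rewrite ffunE; case: eqP => [->|/eqP nx] //.
  by move: (Hd x); rewrite (negbTE nx) => /negbFE/eqP.
- left; split=> //; apply/ffunP=> x; rewrite ffunE; case: eqP => [->|/eqP nx] /=.
    by move: (Hd i); rewrite eqxx gi; case: (h i).
  by move: (Hd x); rewrite (negbTE nx) => /negbFE/eqP.
Qed.
Lemma stair_exists L (g : genotype L) (i j : 'I_L) : i != j -> g i = false -> g j = false ->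
  exists s : {perm 'I_L},
    [/\ g \in stair_simplex s, setb g i \in stair_simplex s,
        setb (setb g i) j \in stair_simplex s & setb g j \notin stair_simplex s].
Proof.
move=> nij gi gj.
pose c (x : 'I_L) : nat := if g x then 0 else if x == i then 1 else if x == j then 2 else 3.
pose key (x : 'I_L) : nat := c x * L + x.
have keylt x y : (key x < key y) = (c x < c y) || ((c x == c y) && (x < y)).
  have hx := ltn_ord x; have hy := ltn_ord y.
  rewrite /key; case: (ltngtP (c x) (c y)) => h /=.
  - apply/idP; have : c x * L + L <= c y * L by rewrite -mulSnr leq_mul2r h orbT.
    lia.
  - apply/negbTE; rewrite -leqNgt.
    have : c y * L + L <= c x * L by rewrite -mulSnr leq_mul2r h orbT.
    lia.
  - by rewrite h ltn_add2l.
have keyinj : injective key.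
  move=> x y; rewrite /key => /(congr1 (modn^~ L)).
  by rewrite !modnMDl !modn_small // => /val_inj.
pose rank x := #|[set y | key y < key x]|.
have rank_lt x : rank x < L.
  apply: (@leq_trans #|[set: 'I_L]|); last by rewrite cardsT card_ord. apply: proper_card; apply/properP; split.
    exact: subsetT.
  by exists x; rewrite !inE ?ltnn.
have rank_mono x y : key x < key y -> rank x < rank y.
  move=> hxy; apply: proper_card; apply/properP; split.
    by apply/subsetP=> z; rewrite !inE => /ltn_trans; apply.
  by exists x; rewrite !inE ?ltnn.
have rank_inj : injective rank.
  move=> x y Hr; apply: keyinj; case: (ltngtP (key x) (key y)) => // h;
  by have := rank_mono _ _ h; rewrite Hr ltnn.
pose r := fun x => Ordinal (rank_lt x).
have r_inj : injective r by move=> x y /(congr1 val) /rank_inj.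
pose s := ((perm r_inj)^-1)%g.
have sv m : stair_vertex s m = [ffun y => rank y < m].
  by apply/ffunP => y; rewrite !ffunE invgK permE.
pose k := num_ones g.
have ci : c i = 1 by rewrite /c gi eqxx.
have cj : c j = 2 by rewrite /c gj eqxx eq_sym (negbTE nij).
have c0 y : (c y == 0) = g y by rewrite /c; case: (g y) => //; case: (y == i); case: (y == j).
have F1 y : g y -> rank y < k.
  move=> gy; apply: proper_card; apply/properP; split; last by exists y; rewrite !inE ?ltnn.
  apply/subsetP=> z; rewrite !inE keylt.
  have : c y == 0 by rewrite c0.
  move/eqP->; rewrite ltn0 /= => /andP[/eqP cz _]; by rewrite -c0 -cz.
have F2 y : ~~ g y -> k <= rank y.
  move=> gy; apply: subset_leq_card; apply/subsetP=> z; rewrite !inE keylt => gz.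
  have : c z == 0 by rewrite c0.
  by move/eqP->; move: gy; rewrite -c0 lt0n => ->.
have F3 : rank i = k.
  apply: eq_card => z; rewrite !inE keylt ci -c0.
  case: (c z =P 1) => [cz|_]; last by rewrite /=; case: (c z) => [|[|]].
  have -> : z = i by move: cz; rewrite /c; case: (g z) => //; case: (z =P i) => // _; case: (z == j).
  by rewrite ci /= ?ltnn ?ltxx.
have F4 : rank j = k.+1.
  have -> : rank j = #|i |: [set x | g x]|.
    apply: eq_card => z.
    rewrite !inE keylt cj -c0.
    case: (z =P i) => [->|nzi]; first by rewrite ci.
    case: (c z =P 2) => [cz|_]; last first.
      rewrite /=; move: nzi; rewrite /c; case: (g z) => //; case: (z =P i) => //; 
      by case: (z == j).
    have -> : z = j by move: cz; rewrite /c; case: (g z) => //; case: (z =P i) => // _; case: (z =P j).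
    by rewrite cj /= ?ltnn ?ltxx.
  by rewrite cardsU1 inE gi.
have kL : k.+2 <= L by rewrite -F4; exact: rank_lt.
have mem m : m <= L -> stair_vertex s m \in stair_simplex s.
  by move=> hm; apply/imsetP; exists (Ordinal (hm : m < L.+1)).
have V0 : stair_vertex s k = g.
  apply/ffunP=> y; rewrite sv ffunE; case gy: (g y); first exact: F1.
  by apply/negbTE; rewrite -leqNgt F2 ?gy.
have gt y : ~~ g y -> y != i -> k < rank y.
  move=> gy nyi; rewrite ltn_neqAle F2 // andbT; apply/eqP => E.
  by move/eqP: nyi; apply; apply: rank_inj; rewrite F3.
have V1 : stair_vertex s k.+1 = setb g i.
  apply/ffunP=> y; rewrite sv !ffunE; case: (eqVneq y i) => [->|nyi]; first by rewrite F3 ltnSn.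
  case gy: (g y); first by apply: ltnW; exact: F1.
  by apply/negbTE; rewrite -leqNgt gt ?gy.
have V2 : stair_vertex s k.+2 = setb (setb g i) j.
  apply/ffunP=> y; rewrite sv !ffunE; case: (eqVneq y j) => [->|nyj]; first by rewrite F4 ltnSn.
  case: (eqVneq y i) => [->|nyi]; first by rewrite F3 ltnW.
  case gy: (g y); first by apply: ltnW; apply: ltnW; exact: F1.
  apply/negbTE; rewrite -leqNgt ltn_neqAle gt ?gy // andbT; apply/eqP => E.
  by move/eqP: nyj; apply; apply: rank_inj; rewrite F4.
exists s; split.
- by rewrite -V0 mem // ltnW // ltnW.
- by rewrite -V1 mem // ltnW.
- by rewrite -V2 mem.
- apply/imsetP => [[m _ E]].
  have := congr1 (fun f : genotype L => f j) E; have := congr1 (fun f : genotype L => f i) E.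
  rewrite /= sv !ffunE eqxx (negbTE nij) gi F3 F4 /= => /esym/negbT.
  by rewrite -leqNgt => h1 /esym h2; move: (leq_trans h2 h1); rewrite ltnNge leqnSn.
Qed.
Local Open Scope ring_scope.
Lemma sq (R : realType) L (w : genotype L -> R) : induces_staircase w ->
  forall (g : genotype L) i j, i != j -> g i = false -> g j = false ->
  w (setb g i) + w (setb g j) < w g + w (setb (setb g i) j).
Proof.
move=> Hst g i j nij gi gj.
have [s [m0 m1 m2 m3]] := stair_exists nij gi gj.
have [[c [a [Heq Hlt]]] _] := proj2 (Hst (stair_simplex s)) (ex_intro _ s erefl).
have Hpar : aff c a g + aff c a (setb (setb g i) j) = aff c a (setb g i) + aff c a (setb g j).
  rewrite /aff addrACA [RHS]addrACA -!big_split /=; congr (_ + _).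
  apply: eq_bigr => x _; rewrite -!mulrDr; congr (_ * _).
  rewrite /Defs.coord !ffunE.
  have nji : j != i by rewrite eq_sym.
  case: (eqVneq x i) => [->|nxi]; first by rewrite gi (negbTE nij) /= add0r addr0.
  case: (eqVneq x j) => [->|nxj]; first by rewrite gj.
  by [].
rewrite -(Heq _ m0) -(Heq _ m2) Hpar (Heq _ m1) ltrD2l.
exact: Hlt.
Qed.
Lemma upA (R : realType) L (w : genotype L -> R) : induces_staircase w ->
  forall i, w (zero_string L) < w (setb (zero_string L) i) ->
  forall g : genotype L, g i = false -> w g < w (setb g i).
Proof.
move=> Hst i H0; apply: geno_ind => [_ //|g j gj IH].
rewrite ffunE => /norP [nij /negbTE gi].
have := sq Hst nij gi gj; rewrite setbC.
have := IH gi; lra.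
Qed.

Lemma setb_neq L (g : genotype L) i : g i = false -> setb g i != g.
Proof. by move=> gi; apply/eqP => /(congr1 (fun f : genotype L => f i)); rewrite ffunE eqxx gi. Qed.

Lemma card_diff_le L (g : genotype L) i : (num_ones g <= num_ones (setb g i))%N.
Proof. by apply: subset_leq_card; apply/subsetP => x; rewrite !inE ffunE orbC => ->. Qed.

Theorem mainTheorem10 (R : realType) (L : nat) (w : genotype L -> R) :
  (forall g, 0 <= w g) ->
  distinct_values w ->
  induces_staircase w ->
  (* (i) *)
  ((forall h, neighbours (zero_string L) h -> w (zero_string L) < w h) ->
     (forall g, g != zero_string L -> w (zero_string L) < w g) /\
     (forall g h, neighbours g h -> (num_ones g < num_ones h)%N -> w g < w h)) /\
  (* (ii) *)
  ((#|[set h | neighbours (zero_string L) h && (w h < w (zero_string L))%R]| <= 1)%N ->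
     exists p, [/\ is_peak w p,
                   (forall q, is_peak w q -> q = p) &
                   (hamming p (one_string L) <= 1)%N]).
Proof.
move=> _ winj Hst.
set z := zero_string L.
have zi i : z i = false by rewrite ffunE.
have wneq g h : g != h -> w g != w h by move=> ngh; apply: contra ngh => /eqP /winj ->.
split.
  move=> Hmin.
  have P i := upA Hst (Hmin _ (neighb_setb (zi i))).
  have Hle : forall g, w z <= w g.
    apply: geno_ind => [//|g j gj IH]; apply: le_trans IH _; apply: ltW; exact: P.
  split.
    by move=> g gne; rewrite lt_neqAle Hle andbT; apply: wneq; rewrite eq_sym.
  move=> g h /neighbP [i [[gi ->]|[hi E]]] Hlt; first exact: P.
  by move: Hlt; rewrite E ltnNge card_diff_le.
move=> Hcard.
set T := [set i : 'I_L | w (setb z i) < w z].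
have Tle : (#|T| <= 1)%N.
  apply: leq_trans Hcard; rewrite -(card_imset _ (f := setb z)); last first.
    move=> i j /(congr1 (fun f : genotype L => f i)); rewrite !ffunE eqxx ?orbF.
    by move/esym/eqP.
  apply: subset_leq_card; apply/subsetP => h /imsetP [i]; rewrite !inE => Hi ->.
  by rewrite neighb_setb.
have P i : i \notin T -> forall g : genotype L, g i = false -> w g < w (setb g i).
  move=> iT; apply: (upA Hst); move: iT; rewrite inE -leNgt le_eqVlt => /orP [/eqP E|//].
  by move: (setb_neq (zi i)); rewrite (winj _ _ (esym E)) eqxx.
set C := [set q : genotype L | [forall i, (i \notin T) ==> q i]].
have oneC : one_string L \in C by rewrite inE; apply/forallP => i; rewrite ffunE implybT.
have CT p q : p \in C -> q \in C -> [set x | p x != q x] \subset T.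
  rewrite !inE => /forallP pC /forallP qC; apply/subsetP => x; rewrite inE.
  apply: contraR => xT; by rewrite (implyP (pC x) xT) (implyP (qC x) xT).
case: (@arg_maxP _ _ _ (one_string L) (fun q => q \in C) w oneC) => p pC pmax.
have peakC q : is_peak w q -> q \in C.
  move=> pk; rewrite inE; apply/forallP => i; apply/implyP => iT.
  case qi: (q i) => //; have := pk _ (neighb_setb qi); have := P i iT q qi.
  move=> h1 h2; have := lt_trans h1 h2; by rewrite ltxx.
exists p; split.
- move=> h nh; case hC: (h \in C).
    have hp : w h <= w p := pmax h hC.
    rewrite lt_neqAle hp andbT wneq //; apply/eqP => E; move: nh.
    by rewrite E /neighbours /hamming (_ : [set x | p x != p x] = set0) ?cards0 //;
       apply/setP => x; rewrite !inE eqxx.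
  move: hC; rewrite inE => /negbT; rewrite negb_forall => /existsP [i]; rewrite negb_imply => /andP [iT hi].
  have pi : p i by move: pC; rewrite inE => /forallP /(_ i) /implyP; apply.
  case/neighbP: nh => [i' [[pi' E]|[hi' E]]].
    by move: hi; rewrite E ffunE pi orbT.
  have ii' : i = i' by move: pi; rewrite E ffunE (negbTE hi) orbF => /eqP.
  by rewrite E; apply: (P i') => //; rewrite -ii'.
- move=> q pk; have qC := peakC _ pk.
  case: (eqVneq q p) => // nqp; exfalso.
  have nb : neighbours q p.
    rewrite /neighbours /hamming eqn_leq (leq_trans (subset_leq_card (CT _ _ qC pC)) Tle) /=.
    rewrite card_gt0.
    have : exists x, q x != p x.
      apply/existsP; apply: contraNT nqp; rewrite negb_exists => /forallP H.
      by apply/eqP/ffunP => x; move: (H x); rewrite negbK => /eqP.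
    by case=> x hx; apply/set0Pn; exists x; rewrite inE.
  have hq : w q <= w p := pmax q qC.
  by have := pk _ nb; rewrite ltNge hq.
- rewrite /hamming; apply: leq_trans Tle; apply: subset_leq_card; exact: CT.
Qed.
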